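(* Consider the two-valued atomic model under the proportional-to-square-roots scheme, with $n_b$ large players of stake $a$ and $n_s$ small players of stake $1$, and suppose $n_s\ge h^2+n_b\lceil h-\sqrt a+1\rceil$. Then the Price of Stability satisfies \[\mathrm{PoS}\le\frac{h+1}{h}\cdot\frac{n_b a+n_s}{n_b(\sqrt a-1)+n_s-h-1}.\]
   Context: Atomic model with threshold $h$: every player has stake $1$ (small) or $a$ (large), with $h,a$ integers, $2\le a\le h-1$. Each player opens her own pool or joins one; pools partition the players; a pool $C$ has reward $\rho(C)=1$ if its total stake is at least $h$ (winning), else $0$. Proportional-to-square-roots scheme: player $i$ with stake $a_i$ in pool $C$ receives $\frac{\sqrt{a_i}}{\sum_{j\in C}\sqrt{a_j}}\rho(C)$. A partition into winning pools is a Nash equilibrium if no player can strictly increase her payment by moving to another pool or opening a new pool alone. $OPT(G)$ is the maximum number of pools of stake at least $h$ in a partition of the players; $W(\Pi)$ is the number of winning pools of $\Pi$; the Price of Stability is $\min_\Pi OPT(G)/W(\Pi)$ over Nash equilibrium partitions. *)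

(* Defs.v *)
From mathcomp Require Import all_boot all_order all_algebra.
From mathcomp Require Import reals.
Set Implicit Arguments. Unset Strict Implicit. Unset Printing Implicit Defensive.
Import Order.TTheory GRing.Theory Num.Theory.
Local Open Scope ring_scope.

Definition stake (nb a : nat) {N : nat} (i : 'I_N) : nat :=
  if (i < nb)%N then a else 1%N.

Definition pstake (nb a : nat) {N : nat} (C : {set 'I_N}) : nat :=
  (\sum_(i in C) stake nb a i)%N.

Definition rho (R : realType) (h nb a : nat) {N : nat} (C : {set 'I_N}) : R :=
  if (h <= pstake nb a C)%N then 1 else 0.

Definition pay (R : realType) (h nb a : nat) {N : nat} (i : 'I_N) (C : {set 'I_N}) : R :=
  Num.sqrt ((stake nb a i)%:R : R) /
    (\sum_(j in C) Num.sqrt ((stake nb a j)%:R : R)) * rho R h nb a C.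

Definition is_NE (R : realType) (h nb a : nat) {N : nat} (P : {set {set 'I_N}}) : Prop :=
  forall i : 'I_N,
    (forall C, C \in P -> C != pblock P i ->
       pay R h nb a i (i |: C) <= pay R h nb a i (pblock P i)) /\
    pay R h nb a i [set i] <= pay R h nb a i (pblock P i).

Definition W (h nb a : nat) {N : nat} (P : {set {set 'I_N}}) : nat :=
  #|[set C in P | (h <= pstake nb a C)%N]|.

Definition OPT (h nb a N : nat) : nat :=
  (\max_(P : {set {set 'I_N}} | partition P [set: 'I_N]) W h nb a P)%N.

(* Main.v *)
Require Import Defs.
From mathcomp Require Import all_boot all_order all_algebra.
From mathcomp Require Import reals zify ring lra.
Import Order.TTheory GRing.Theory Num.Theory.
Lemma sum_div n k l : (0 < k)%N ->
  (\sum_(0 <= u < n * k) ((u %/ k) == l) = (l < n) * k)%N.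
Proof.
move=> k0; elim: n => [|n IH]; first by rewrite mul0n big_geq.
rewrite mulSn addnC (big_cat_nat (n := n * k)) //=; last by lia.
rewrite IH.
have := big_addn 0 (n * k + k) (n * k) xpredT (fun i => (i %/ k == l) : nat).
rewrite add0n => ->.
have -> : (n * k + k - n * k = k)%N by lia.
rewrite (@eq_big_nat _ _ _ 0 k _ (fun _ => (n == l) : nat)); last first.
  move=> u /andP[_ uk]; rewrite (addnC u) divnMDl // divn_small //.
  by rewrite addn0.
rewrite sum_nat_const_nat subn0.
case: eqP => E.
- rewrite E ltnn ltnSn /=; lia.
- have -> : (l < n.+1) = (l < n).
    by rewrite ltnS leq_eqVlt; case: eqP => // E'; case: (E (esym E')).
  by rewrite /= muln0 addn0.
Qed.

Lemma sum_eq_lt n l : (\sum_(0 <= i < n) (i == l) = (l < n))%N.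
Proof.
rewrite -[RHS]muln1 -(sum_div n 1 l (ltn0Sn 0)) muln1.
by apply: eq_big_nat => i _; rewrite divn1.
Qed.

Definition labelS (nb j h m u : nat) : nat :=
  if (u < nb * j)%N then u %/ j
  else if (u - nb * j < (m %/ h) * h)%N then (nb + (u - nb * j) %/ h)%N
  else (nb + (u - nb * j - (m %/ h) * h))%N.

Lemma count_labelS nb j h m l : (0 < j)%N -> (0 < h)%N ->
  (\sum_(0 <= u < nb * j + m) (labelS nb j h m u == l) =
   (l < nb) * j + \sum_(0 <= v < (m %/ h) * h) (nb + v %/ h == l)
   + \sum_(0 <= w < m %% h) (nb + w == l))%N.
Proof.
move=> j0 h0.
rewrite (big_cat_nat (n := nb * j)) //=; last by lia.
rewrite -(sum_div nb j l j0) -addnA; congr (_ + _)%N.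
  by apply: eq_big_nat => u /andP[_ uh]; rewrite /labelS uh.
have := big_addn 0 (nb * j + m) (nb * j) xpredT (fun u => (labelS nb j h m u == l) : nat).
rewrite add0n => ->.
have -> : (nb * j + m - nb * j = (m %/ h) * h + m %% h)%N by rewrite -divn_eq; lia.
rewrite (big_cat_nat (n := (m %/ h) * h)) //=; last by lia.
congr (_ + _)%N.
  apply: eq_big_nat => u /andP[_ uh]; rewrite /labelS.
  have -> : (u + nb * j < nb * j)%N = false by lia.
  by rewrite addnK uh.
have := big_addn 0 ((m %/ h) * h + m %% h) ((m %/ h) * h) xpredT
   (fun u => (labelS nb j h m (u + nb * j) == l) : nat).
rewrite add0n => ->.
have -> : ((m %/ h) * h + m %% h - (m %/ h) * h = m %% h)%N by lia.
apply: eq_big_nat => u /andP[_ uh]; rewrite /labelS.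
have -> : (u + (m %/ h) * h + nb * j < nb * j)%N = false by rewrite ltnNge leq_addl.
rewrite addnK.
have -> : (u + (m %/ h) * h < (m %/ h) * h)%N = false by rewrite ltnNge leq_addl.
by rewrite addnK.
Qed.


Definition labelI nb ns j h m (x : 'I_(nb+ns)) : nat :=
  if x < nb then val x else labelS nb j h m (x - nb).

Lemma pool_counts nb ns j h m (x : 'I_(nb+ns)) :
  ns = nb * j + m -> 0 < j -> 0 < h -> h <= m %/ h ->
  let C := [set y in [set: 'I_(nb+ns)] | labelI nb ns j h m x == labelI nb ns j h m y] in
  exists nl nsm : nat,
   [/\ \sum_(i < nb) (lshift ns i \in C) = nl,
       \sum_(u < ns) (rshift nb u \in C) = nsm &
       (nl = 1 /\ nsm = j) \/ (nl = 0 /\ (nsm = h \/ nsm = h.+1))].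
Proof.
move=> nsE j0 h0 hq C.
set q := m %/ h. set r := m %% h.
have rh : r < h by rewrite ltn_pmod.
set l := labelI nb ns j h m x.
have nLE : \sum_(i < nb) (lshift ns i \in C) = (l < nb).
  rewrite -sum_eq_lt big_mkord; apply: eq_bigr => i _.
  by rewrite !inE /labelI /= ltn_ord eq_sym.
have nSE : \sum_(u < ns) (rshift nb u \in C) =
     \sum_(0 <= u < nb * j + m) (labelS nb j h m u == l).
  rewrite -nsE big_mkord; apply: eq_bigr => u _.
  rewrite !inE /labelI /= -/(labelI nb ns j h m x) -/l (_ : (nb + u < nb) = false) ?addKn 1?eq_sym //.
  by rewrite ltnNge leq_addr.
rewrite count_labelS // in nSE.
have lrange : (l < nb) \/ exists2 t, (t < q) & l = nb + t.
  rewrite /l /labelI /labelS; case: ifP => xnb; first by left.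
  have ux : x - nb < nb * j + m by rewrite -nsE; have := ltn_ord x; lia.
  case: ifP => unj; first by left; rewrite ltn_divLR.
  right; case: ifP => vq.
    by exists ((x - nb - nb*j) %/ h) => //; rewrite ltn_divLR.
  exists (x - nb - nb * j - q * h) => //.
  have : x - nb - nb*j < q*h + r by rewrite /q /r -divn_eq; lia.
  move: vq; rewrite -/q; lia.
case: lrange => [lnb | [t tq lE]].
  have z1 : \sum_(0 <= v < q * h) (nb + v %/ h == l) = 0.
    by rewrite big1 // => v _; case: eqP => // E; move: lnb; rewrite -E ltnNge leq_addr.
  have z2 : \sum_(0 <= v < r) (nb + v == l) = 0.
    by rewrite big1 // => v _; case: eqP => // E; move: lnb; rewrite -E ltnNge leq_addr.
  exists 1, j; split; last by left.
  - by rewrite nLE lnb.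
  - by rewrite nSE lnb z1 z2 mul1n !addn0.
have z1 : \sum_(0 <= v < q * h) (nb + v %/ h == l) = h.
  rewrite lE (@eq_big_nat _ _ _ _ _ _ (fun v => (v %/ h == t) : nat)).
    by rewrite sum_div // tq mul1n.
  by move=> v _; rewrite eqn_add2l.
have z2 : \sum_(0 <= v < r) (nb + v == l) = (t < r).
  rewrite lE (@eq_big_nat _ _ _ _ _ _ (fun v => (v == t) : nat)).
    by rewrite sum_eq_lt.
  by move=> v _; rewrite eqn_add2l.
have lnb : (l < nb) = false by rewrite lE ltnNge leq_addr.
exists 0, (h + (t < r)); split.
- by rewrite nLE lnb.
- by rewrite nSE lnb z1 z2 mul0n.
- by right; split => //; case: (t < r); [right; rewrite addn1 | left; rewrite addn0].
Qed.

Lemma leq_pool a h fs : fs <= a -> h <= a * 1 + (h - fs).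
Proof. lia. Qed.

Local Open Scope ring_scope.

Lemma sum_stake (nb ns a : nat) (V : nmodType) (F : nat -> V) (C : {set 'I_(nb+ns)}) :
  \sum_(x in C) F (stake nb a x) =
  F a *+ (\sum_(i < nb) (lshift ns i \in C))%N + F 1%N *+ (\sum_(u < ns) (rshift nb u \in C))%N.
Proof.
rewrite big_mkcond big_split_ord /=; congr (_ + _).
  rewrite -sumrMnr; apply: eq_bigr => i _.
  by rewrite /stake /= ltn_ord; case: (_ \in C).
rewrite -sumrMnr; apply: eq_bigr => i _.
have -> : stake nb a (rshift nb i) = 1%N by rewrite /stake /= ltnNge leq_addr.
by case: (_ \in C).
Qed.

Lemma pstakeE (nb ns a : nat) (C : {set 'I_(nb+ns)}) :
  pstake nb a C = (a * (\sum_(i < nb) (lshift ns i \in C)) + (\sum_(u < ns) (rshift nb u \in C)))%N.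
Proof.
rewrite /pstake big_mkcond big_split_ord /=; congr (_ + _)%N.
  rewrite big_distrr /=; apply: eq_bigr => i _.
  by rewrite /stake /= ltn_ord; case: (_ \in C); rewrite ?muln0 ?muln1.
apply: eq_bigr => i _.
have -> : stake nb a (rshift nb i) = 1%N by rewrite /stake /= ltnNge leq_addr.
by case: (_ \in C).
Qed.

Theorem theoremD2 (R : realType) (h a nb ns : nat) :
  (2 <= a)%N -> (a <= h - 1)%N ->
  (ns%:R : R) >= (h ^ 2)%:R +
     nb%:R * (Num.ceil (h%:R - Num.sqrt (a%:R : R) + 1))%:~R ->
  exists P : {set {set 'I_(nb + ns)}},
    [/\ partition P [set: 'I_(nb + ns)],
        (forall C, C \in P -> (h <= pstake nb a C)%N),
        is_NE R h nb a P &
        (OPT h nb a (nb + ns))%:R / (W h nb a P)%:R <=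
          (h.+1)%:R / h%:R *
          ((nb * a + ns)%:R /
           (nb%:R * (Num.sqrt (a%:R : R) - 1) + ns%:R - h%:R - 1))].
Proof.
move=> a2 ah hyp.
have h3 : (3 <= h)%N by lia.
have h0 : (0 < h)%N by lia.
have ah' : (a < h)%N by lia.
have hR : 3%:R <= (h%:R : R) by rewrite ler_nat.
set s := Num.sqrt (a%:R : R).
have s0 : 0 <= s := sqrtr_ge0 _.
have s1 : 1 <= s by rewrite -sqrtr1 ler_wsqrtr // ler1n; lia.
have ss : s ^+ 2 = a%:R by rewrite sqr_sqrtr // ler0n.
set fs := Num.truncn s.
have /andP[fs_le fs_lt] := truncn_itv s0.
rewrite -/fs in fs_le fs_lt.
have fsa : (fs * fs <= a)%N.
  by rewrite -(ler_nat R) natrM -ss expr2; apply: ler_pM.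
have fs1 : (0 < fs)%N by rewrite truncn_gt0.
have fsa' : (fs <= a)%N by apply: leq_trans fsa; rewrite leq_pmulr.
set j := (h - fs)%N.
have j0 : (0 < j)%N by lia.
have jR : (j%:R : R) = h%:R - fs%:R by rewrite natrB //; lia.
have fs_lt' : s < fs%:R + 1 by rewrite natr1.
have nsj : (h ^ 2 + nb * j <= ns)%N.
  rewrite -(ler_nat R) natrD natrM; apply: le_trans hyp; rewrite lerD2l.
  apply: ler_wpM2l; first exact: ler0n.
  apply: le_trans (ceil_ge _); rewrite jR -/s; lra.
set m := (ns - nb * j)%N.
have nsE : ns = (nb * j + m)%N by lia.
have mh : (h * h <= m)%N by move: nsj; rewrite -mulnn; lia.
set q := (m %/ h)%N. set r := (m %% h)%N.
have hq : (h <= q)%N by rewrite leq_divRL //; lia.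
have rh : (r < h)%N by rewrite ltn_pmod //; lia.
pose P := preim_partition (labelI nb ns j h m) [set: 'I_(nb+ns)].
have partP : partition P [set: _] := preim_partitionP _ _.
have coverP : cover P = [set: _] by case/and3P: partP => /eqP.
have trivP : trivIset P by case/and3P: partP.
pose SS (C : {set 'I_(nb+ns)}) := \sum_(x in C) Num.sqrt ((stake nb a x)%:R : R).
have poolP : forall C, C \in P -> exists nl nsm : nat,
   [/\ pstake nb a C = (a * nl + nsm)%N, SS C = s *+ nl + nsm%:R &
       (nl = 1%N /\ nsm = j) \/ (nl = 0%N /\ (nsm = h \/ nsm = h.+1))].
  move=> C /imsetP[x _ ->].
  have := pool_counts _ _ _ _ _ x nsE j0 h0 hq; rewrite /= => -[nl [nsm [E1 E2 cs]]].
  exists nl, nsm; split => //.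
    by rewrite pstakeE E1 E2.
  by rewrite /SS (sum_stake _ _ _ _ (fun n : nat => Num.sqrt (n%:R : R))) E1 E2 sqrtr1.
have poolW : forall C, C \in P -> (h <= pstake nb a C)%N.
  move=> C CP; have [nl [nsm [-> _ [[-> ->]|[-> [->|->]]]]]] := poolP C CP.
  - exact: leq_pool.
  - by rewrite muln0.
  - by rewrite muln0 leqnSn.
have poolS : forall C, C \in P -> h%:R <= SS C <= h%:R + 1.
  move=> C CP; have [nl [nsm [_ -> [[-> ->]|[-> [->|->]]]]]] := poolP C CP.
  - by rewrite mulr1n jR; apply/andP; split; lra.
  - by rewrite mulr0n add0r lexx /= lerDl.
  - by rewrite mulr0n add0r -natr1 lexx andbT lerDl.
have sumT (n k : nat) (f : 'I_n -> 'I_k) : (\sum_(i < n) (f i \in [set: 'I_k]))%N = n.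
  by rewrite (eq_bigr (fun _ => 1%N)) ?sum_nat_const ?card_ord ?muln1 // => i _; rewrite inE.
have SST : SS [set: 'I_(nb+ns)] = s *+ nb + ns%:R.
  by rewrite /SS (sum_stake _ _ _ _ (fun n : nat => Num.sqrt (n%:R : R))) !sumT sqrtr1.
have PST : pstake nb a [set: 'I_(nb+ns)] = (a * nb + ns)%N.
  by rewrite pstakeE !sumT.
have sumSS : \sum_(C in P) SS C = s *+ nb + ns%:R.
  by rewrite -SST /SS -coverP (big_trivIset (E := fun x => Num.sqrt ((stake nb a x)%:R : R)) P trivP).
have WE : W h nb a P = #|P|.
  by rewrite /W; apply: eq_card => C; rewrite inE; case CP: (C \in P) => //=; rewrite poolW.
exists P; split => //.
- move=> i; set B := pblock P i.
  have BP : B \in P by apply: pblock_mem; rewrite coverP inE.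
  have si0 : 0 <= Num.sqrt ((stake nb a i)%:R : R) := sqrtr_ge0 _.
  have si1 : 1 <= Num.sqrt ((stake nb a i)%:R : R).
    apply: (@le_trans _ _ (Num.sqrt 1)); first by rewrite sqrtr1.
    by apply: ler_wsqrtr; rewrite ler1n /stake; case: ifP => _ //; exact: ltnW a2.
  have /andP[SB1 SB2] := poolS B BP.
  have payB : pay R h nb a i B = Num.sqrt ((stake nb a i)%:R : R) / SS B.
    by rewrite /pay /rho poolW // mulr1.
  split.
  + move=> C CP CB.
    have iC : i \notin C.
      apply/negP => iC; move/eqP: CB; apply.
      by rewrite /B (def_pblock trivP CP iC).
    have /andP[SC1 SC2] := poolS C CP.
    rewrite payB /pay big_setU1 //= -/(SS C).
    apply: (@le_trans _ _ (Num.sqrt ((stake nb a i)%:R : R) / (Num.sqrt ((stake nb a i)%:R : R) + SS C))).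
      rewrite /rho; case: ifP => _; rewrite ?mulr1 ?mulr0 //.
      by apply: divr_ge0 => //; lra.
    rewrite ler_pdivrMr; last by lra.
    rewrite mulrAC ler_pdivlMr; last by lra.
    by apply: ler_wpM2l => //; lra.
  + rewrite payB /pay /rho.
    have -> : (h <= pstake nb a [set i])%N = false.
      apply/negbTE; rewrite -ltnNge /pstake big_set1 /stake.
      by case: ifP => _; [exact: ah' | exact: leq_trans _ h3].
    by rewrite mulr0; apply: divr_ge0 => //; lra.
- have optB : (OPT h nb a (nb+ns) * h <= nb * a + ns)%N.
    rewrite -leq_divRL //.
    apply/bigmax_leqP => P' partP'; rewrite leq_divRL //.
    rewrite /W -sum_nat_const.
    apply: (@leq_trans (\sum_(C in P' | (h <= pstake nb a C)%N) pstake nb a C)).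
      rewrite (eq_bigl (fun C => (C \in P') && (h <= pstake nb a C)%N)); last by move=> C; rewrite inE.
      by apply: leq_sum => C /andP[].
    apply: (@leq_trans (\sum_(C in P') pstake nb a C)).
      rewrite big_mkcondr /=; apply: leq_sum => C _; case: ifP => //.
    rewrite /pstake -(set_partition_big (E := fun x => stake nb a x) P' partP').
    by rewrite -/(pstake nb a [set: 'I_(nb+ns)]) PST mulnC.
  rewrite WE.
  set O := (OPT h nb a (nb + ns))%:R.
  set Wr := (#|P|)%:R.
  set T := ((nb * a + ns)%N)%:R.
  set D := nb%:R * (s - 1) + ns%:R - h%:R - 1.
  have OhT : O * h%:R <= T by rewrite /O /T -natrM ler_nat.
  have sumle : \sum_(C in P) SS C <= \sum_(C in P) (h%:R + 1).
    by apply: ler_sum => C CP; case/andP: (poolS C CP).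
  rewrite sumSS sumr_const -mulr_natr -/Wr -mulr_natr in sumle.
  have nb0 : 0 <= (nb%:R : R) := ler0n _ _.
  have W0 : 0 <= Wr := ler0n _ _.
  have T0 : 0 <= T := ler0n _ _.
  have nsR : (h%:R : R) ^+ 2 <= ns%:R.
    by rewrite -natrX ler_nat; apply: leq_trans nsj; apply: leq_addr.
  have Dpos : 0 < D by rewrite /D; nra.
  have DW : D <= h.+1%:R * Wr by rewrite -natr1 /D; nra.
  have Wpos : 0 < Wr by nra.
  have hpos : 0 < (h%:R : R) by lra.
  rewrite ler_pdivrMr //.
  apply: (@le_trans _ _ (T / h%:R)); first by rewrite ler_pdivlMr.
  have -> : h.+1%:R / h%:R * (T / D) * Wr = T / h%:R * (h.+1%:R * Wr / D) by ring.
  rewrite -{1}(mulr1 (T / h%:R)); apply: ler_wpM2l; first by apply: divr_ge0 => //; lra.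
  by rewrite ler_pdivlMr // mul1r.
Qed.
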